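(* Let $\phi=(\phi_g,X_g,X)_{g\in G}$ be a partial action of a group $G$ on a set $X$ and let $\psi:G\to H$ be a group homomorphism. For $h\in H$ put $X_h:=\bigcup_{g\in G,\ \psi(g)=h}X_g$ and $\overline{\phi}_h:X_{h^{-1}}\to X_h$, $\overline{\phi}_h(x):=\phi_g(x)$ whenever $\psi(g)=h$ and $x\in X_{g^{-1}}$. Then these data give a well-defined partial action $\overline{\phi}=(\overline{\phi}_h,X_h,X)_{h\in H}$ of $H$ on $X$ if and only if for every $g\in\ker\psi$ one has $X_g=X_{g^{-1}}$ and $\phi_g=\operatorname{id}$ (on $X_{g^{-1}}$).
   Context: A partial action of a group $G$ (identity $\varepsilon$) on a set $X$ is $\phi=(\phi_g,X_g,X)_{g\in G}$ with $X_g\subseteq X$ and bijections $\phi_g:X_{g^{-1}}\to X_g$ such that (i) $X_\varepsilon=X$ and $\phi_\varepsilon=\operatorname{id}_X$; (ii) $\phi_g(X_{g^{-1}}\cap X_h)=X_g\cap X_{gh}$ for all $g,h$; (iii) $\phi_g(\phi_h(x))=\phi_{gh}(x)$ for all $g,h$ and $x\in X_{h^{-1}}\cap X_{h^{-1}g^{-1}}$. *)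

(* Defs.v *)
Record group := Group {
  gcar :> Type;
  gmul : gcar -> gcar -> gcar;
  ginv : gcar -> gcar;
  gone : gcar;
  gmulA : forall a b c, gmul a (gmul b c) = gmul (gmul a b) c;
  gmul1l : forall a, gmul gone a = a;
  gmulVl : forall a, gmul (ginv a) a = gone
}.

Arguments gmul {g} _ _.
Arguments ginv {g} _.
Arguments gone {g}.

Definition is_hom (G H : group) (psi : G -> H) : Prop :=
  forall a b : G, psi (gmul a b) = gmul (psi a) (psi b).

(* A partial action (phi_g, X_g, X)_{g in G}: D g is the subset X_g of X,
   f g is phi_g (a total function whose values outside X_{g^-1} are irrelevant). *)
Definition partial_action (G : group) (X : Type)
    (D : G -> X -> Prop) (f : G -> X -> X) : Prop :=
  (forall x, D gone x) /\ (forall x, f gone x = x) /\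
  (forall g : G,
     (forall x, D (ginv g) x -> D g (f g x)) /\
     (forall x y, D (ginv g) x -> D (ginv g) y -> f g x = f g y -> x = y) /\
     (forall y, D g y -> exists x, D (ginv g) x /\ f g x = y)) /\
  (forall (g h : G) (y : X),
     (D g y /\ D (gmul g h) y) <-> exists x, D (ginv g) x /\ D h x /\ f g x = y) /\
  (forall (g h : G) (x : X),
     D (ginv h) x -> D (gmul (ginv h) (ginv g)) x -> f g (f h x) = f (gmul g h) x).

Definition induced_dom (G H : group) (X : Type) (psi : G -> H)
    (D : G -> X -> Prop) (h : H) (x : X) : Prop :=
  exists g : G, psi g = h /\ D g x.

(* Main.v *)
Require Import Defs.
From Stdlib Require Import Classical ClassicalEpsilon.

Lemma mulgV (G : group) (a : G) : gmul a (ginv a) = gone.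
Proof.
  rewrite <- (gmul1l G (gmul a (ginv a))).
  rewrite <- (gmulVl G (ginv a)) at 1.
  rewrite <- gmulA. rewrite (gmulA G (ginv a) a (ginv a)).
  rewrite gmulVl, gmul1l. apply gmulVl.
Qed.

Lemma mulg1 (G : group) (a : G) : gmul a gone = a.
Proof. rewrite <- (gmulVl G a), gmulA, mulgV. apply gmul1l. Qed.

Lemma inv_uniq (G : group) (a b : G) : gmul b a = gone -> b = ginv a.
Proof.
  intro H. rewrite <- (mulg1 G b), <- (mulgV G a), gmulA, H. apply gmul1l.
Qed.

Lemma invgK (G : group) (a : G) : ginv (ginv a) = a.
Proof. symmetry. apply inv_uniq. apply mulgV. Qed.

Lemma invgM (G : group) (a b : G) : ginv (gmul a b) = gmul (ginv b) (ginv a).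
Proof.
  symmetry. apply inv_uniq.
  rewrite <- gmulA, (gmulA G (ginv a) a b), gmulVl, gmul1l. apply gmulVl.
Qed.

Lemma mulKg (G : group) (a b : G) : gmul (ginv a) (gmul a b) = b.
Proof. rewrite gmulA, gmulVl. apply gmul1l. Qed.

Lemma mulKVg (G : group) (a b : G) : gmul a (gmul (ginv a) b) = b.
Proof. rewrite gmulA, mulgV. apply gmul1l. Qed.

Lemma hom1 (G H : group) (psi : G -> H) : is_hom G H psi -> psi gone = gone.
Proof.
  intro hp. assert (E : psi gone = gmul (psi gone) (psi gone)).
  { rewrite <- hp, gmul1l. reflexivity. }
  rewrite <- (mulKg H (psi gone) (psi gone)), <- E. apply gmulVl.
Qed.

Lemma homV (G H : group) (psi : G -> H) (a : G) :
  is_hom G H psi -> psi (ginv a) = ginv (psi a).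
Proof.
  intro hp. apply inv_uniq. rewrite <- hp, gmulVl. apply hom1; auto.
Qed.

Lemma Deq (G : group) (X : Type) (D : G -> X -> Prop) a b x :
  a = b -> D a x -> D b x.
Proof. intros ->; auto. Qed.

Theorem mainTheorem2 (G H : group) (X : Type) (D : G -> X -> Prop) (f : G -> X -> X)
    (psi : G -> H) :
  partial_action G X D f -> is_hom G H psi ->
  ((exists fbar : H -> X -> X,
      (forall (g : G) (x : X), D (ginv g) x -> fbar (psi g) x = f g x) /\
      partial_action H X (induced_dom G H X psi D) fbar)
   <->
   (forall g : G, psi g = gone ->
      (forall x, D g x <-> D (ginv g) x) /\
      (forall x, D (ginv g) x -> f g x = x))).
Proof.
  intros PA hp. destruct PA as [Di [fi [bij [ii iii]]]].
  split.
  - intros [fbar [comp PAb]]. destruct PAb as [_ [fbi _]].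
    assert (Hf : forall g, psi g = gone -> forall x, D (ginv g) x -> f g x = x).
    { intros g hg x hx. rewrite <- comp by exact hx. rewrite hg. apply fbi. }
    assert (H1 : forall g, psi g = gone -> forall x, D (ginv g) x -> D g x).
    { intros g hg x hx. destruct (bij g) as [m _].
      rewrite <- (Hf g hg x hx). apply m; auto. }
    intros g hg. split; [split|]; auto.
    intro hx. apply (H1 (ginv g)).
    + rewrite homV, hg by exact hp. symmetry. apply inv_uniq. apply gmul1l.
    + rewrite invgK. exact hx.
  - intros ker.
    assert (WD : forall a b x, psi a = psi b -> D (ginv a) x -> D (ginv b) x ->
                 f a x = f b x).
    { intros a b x hab ha hb.
      set (m := gmul b (ginv a)).
      assert (hm : psi m = gone).
      { unfold m. rewrite hp, homV, <- hab by exact hp. apply mulgV. }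
      assert (E1 : f m (f a x) = f (gmul m a) x).
      { apply iii; auto. apply (Deq G X D (ginv b)); auto.
        unfold m. rewrite invgM, invgK. symmetry. apply mulKg. }
      assert (E2 : gmul m a = b).
      { unfold m. rewrite <- gmulA, gmulVl. apply mulg1. }
      rewrite E2 in E1. rewrite <- E1. symmetry. apply (proj2 (ker m hm)).
      assert (Hy : D a (f a x) /\ D (gmul a (ginv b)) (f a x)).
      { apply ii. exists x. auto. }
      apply (Deq G X D (gmul a (ginv b))); [|tauto].
      unfold m. rewrite invgM, invgK. reflexivity. }
    assert (INV : forall g x, D (ginv g) x -> f (ginv g) (f g x) = x).
    { intros g x hx. rewrite iii; auto.
      - rewrite gmulVl. apply fi.
      - rewrite invgK, gmulVl. apply Di. }
    set (fbar := fun (h : H) (x : X) =>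
      match excluded_middle_informative (exists g, psi g = h /\ D (ginv g) x) with
      | left Hex => f (proj1_sig (constructive_indefinite_description _ Hex)) x
      | right _ => x
      end).
    assert (KEY : forall g x, D (ginv g) x -> fbar (psi g) x = f g x).
    { intros g x hx. unfold fbar.
      destruct (excluded_middle_informative _) as [Hex|Hn].
      - destruct (constructive_indefinite_description _ Hex) as [g0 [h0 d0]]; simpl.
        apply WD; auto.
      - exfalso. apply Hn. exists g; auto. }
    assert (DV : forall h x, induced_dom G H X psi D (ginv h) x ->
                 exists g, psi g = h /\ D (ginv g) x).
    { intros h x [g [hg dg]]. exists (ginv g). split.
      - rewrite homV, hg, invgK by exact hp. reflexivity.
      - rewrite invgK. exact dg. }
    exists fbar. split; [exact KEY|].
    split; [|split; [|split; [|split]]].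
    + intro x. exists gone. split; [apply hom1; auto | apply Di].
    + intro x. rewrite <- (hom1 G H psi hp). rewrite KEY. apply fi.
      apply (Deq G X D gone); [|apply Di]. apply inv_uniq. apply gmul1l.
    + intro h. split; [|split].
      * intros x hx. destruct (DV h x hx) as [g [<- dg]].
        rewrite KEY by exact dg. exists g. split; auto. apply (bij g); auto.
      * intros x y hx hy e. destruct (DV h x hx) as [g1 [<- d1]].
        destruct (DV _ y hy) as [g2 [e2 d2]].
        rewrite KEY in e by exact d1. rewrite <- e2, KEY in e by exact d2.
        pose proof (INV g1 x d1) as I1. pose proof (INV g2 y d2) as I2. rewrite e in I1. rewrite <- I1. rewrite <- I2 at 2.
        apply WD.
        -- rewrite !homV, e2 by exact hp. reflexivity.
        -- rewrite invgK, <- e. apply (bij g1); auto.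
        -- rewrite invgK. apply (bij g2); auto.
      * intros y [g [<- dg]]. exists (f (ginv g) y). split.
        -- exists (ginv g). split; [apply homV; auto|].
           apply (bij (ginv g)). rewrite invgK. exact dg.
        -- rewrite KEY.
           ++ pose proof (INV (ginv g) y) as I. rewrite invgK in I. apply I. exact dg.
           ++ apply (bij (ginv g)). rewrite invgK. exact dg.
    + intros a b y. split.
      * intros [[g1 [h1 d1]] [g2 [h2 d2]]].
        assert (Hx : exists x, D (ginv g1) x /\ D (gmul (ginv g1) g2) x /\ f g1 x = y).
        { apply ii. split; auto. rewrite mulKVg. exact d2. }
        destruct Hx as [x [dx1 [dx2 ex]]]. exists x. split; [|split].
        -- exists (ginv g1). split; [rewrite homV, h1 by exact hp; reflexivity|exact dx1].
        -- exists (gmul (ginv g1) g2). split; [|exact dx2].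
           rewrite hp, homV, h1, h2 by exact hp. apply mulKg.
        -- rewrite <- h1. rewrite KEY; auto.
      * intros [x [hx [[g2 [h2 d2]] ex]]].
        destruct (DV a x hx) as [g1 [h1 d1]].
        assert (Hy : D g1 y /\ D (gmul g1 g2) y).
        { apply ii. exists x. rewrite <- h1, KEY in ex by exact d1. auto. }
        split.
        -- exists g1. split; tauto.
        -- exists (gmul g1 g2). split; [rewrite hp, h1, h2; reflexivity | tauto].
    + intros a b x hb hab.
      destruct (DV b x hb) as [g2 [h2 d2]].
      destruct hab as [k [hk dk]].
      set (g1 := ginv (gmul g2 k)).
      assert (e1 : gmul (ginv g2) (ginv g1) = k).
      { unfold g1. rewrite invgK. apply mulKg. }
      assert (ha : psi g1 = a).
      { unfold g1. rewrite homV, hp, h2, hk, mulKVg, invgK by exact hp. reflexivity. }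
      assert (dy : D (ginv g1) (f g2 x)).
      { assert (Hy : D g2 (f g2 x) /\ D (gmul g2 (gmul (ginv g2) (ginv g1))) (f g2 x)).
        { apply ii. exists x. rewrite e1. auto. }
        rewrite mulKVg in Hy. tauto. }
      rewrite <- h2, <- ha. rewrite (KEY g2 x d2). rewrite (KEY g1 _ dy). rewrite <- hp, KEY.

      * apply iii; auto. rewrite e1. exact dk.
      * rewrite invgM, e1. exact dk.
Qed.
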